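(* For every two absolutely continuous probability measures $\mu,\nu$ on $\mathbb R$, there exist random variables $X,Y$ on a common probability space, distributed $\mu$ and $\nu$ respectively, such that $X-Y$ is almost surely a rational number. *)

(* Defs.v *)
From HB Require Import structures.
From mathcomp Require Import all_boot all_order all_algebra.
From mathcomp Require Import all_classical all_reals all_analysis.
Set Implicit Arguments. Unset Strict Implicit. Unset Printing Implicit Defensive.

(* Main.v *)
Require Import Defs.
From HB Require Import structures.
From mathcomp Require Import all_boot all_order all_algebra.
From mathcomp Require Import all_classical all_reals all_analysis.
From mathcomp Require Import measurable_realfun lebesgue_integral_differentiation.
From mathcomp Require Import ring lra.
Import Order.TTheory GRing.Theory Num.Theory.
Import numFieldNormedType.Exports.
Local Open Scope classical_set_scope.
Local Open Scope ring_scope.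

(* Proof: couple mu and nu through the greedy rational-shift matching of their
   densities, and use Lebesgue's density theorem to show the matching exhausts
   both densities. *)
Section shift.
Context {R : realType}.
Local Notation leb := (@lebesgue_measure R).
Local Open Scope ereal_scope.

Lemma measurable_shift (c : R) : measurable_fun [set: R] (fun x : R => x + c)%R.
Proof. by apply: measurable_funD => //; exact: measurable_cst. Qed.

Lemma leb_shift (c : R) (A : set R) : measurable A ->
  pushforward leb (fun x : R => (x + c)%R) A = leb A.
Proof.
move=> mA.
pose f : measurableTypeR R -> measurableTypeR R := (fun x : R => (x + c)%R).
change (pushforward leb f A = leb A).
apply/esym/lebesgue_measure_unique => //=.
  exact: measurable_shift.
move=> _ _ [[a b]] _ <-.
rewrite /pushforward.
have -> : f @^-1` `]a, b]%classic = `](a - c)%R, (b - c)%R]%classic.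
  apply/seteqP; split => x /=; rewrite !in_itv/= ?lerBrDr ?ltrBlDr //.
rewrite !lebesgue_measure_itv/= !lte_fin ltrD2r.
case: ifP => // _; rewrite -!EFinD; congr EFin; ring.
Qed.
End shift.

Section ishift.
Context {R : realType}.
Local Notation leb := (@lebesgue_measure R).
Local Open Scope ereal_scope.

Lemma integral_shift (c : R) (F : R -> \bar R) :
  measurable_fun [set: R] F -> (forall x, 0 <= F x) ->
  \int[leb]_x F (x + c)%R = \int[leb]_x F x.
Proof.
move=> mF F0.
pose f : measurableTypeR R -> measurableTypeR R := (fun x : R => (x + c)%R).
have mf : measurable_fun [set: measurableTypeR R] f by exact: measurable_shift.
rewrite [RHS](eq_measure_integral (pushforward leb f)); last first.
  by move=> A mA _; exact: (esym (leb_shift c A mA)).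
rewrite ge0_integral_pushforward//.
Qed.
End ishift.

Section density.
Context {R : realType}.
Local Notation leb := (@lebesgue_measure R).
Local Open Scope ereal_scope.

Lemma density_point (A : set R) : measurable A -> 0 < leb A ->
  exists a : R, \forall r \near (0%R:R)^'+,
    (0 < r)%R /\ ((3 / 4 * (r *+ 2))%R%:E < leb (A `&` ball a r)).
Proof.
move=> mA A0.
have [N [mN N0 sub]] := lebesgue_density mA.
have [a [Aa Na]] : exists a, A a /\ ~ N a.
  apply: contrapT => H.
  have AN : A `<=` N by move=> a Aa; apply: contrapT => Na; apply: H; exists a.
  have : leb A <= leb N by apply: le_measure => //; rewrite inE.
  by rewrite N0 => /(lt_le_trans A0); rewrite ltxx.
have Pa : (leb (A `&` ball a r) * (leb (ball a r))^-1) @[r --> (0%R:R)^'+] --> (\1_A a)%:E.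
  by apply: contrapT => Pa; apply: Na; apply: sub.
rewrite indicE mem_set// in Pa.
exists a.
have h34 : ((3 / 4)%R%:E < (1%R:R)%:E) by rewrite lte_fin; lra.
have := Pa _ (open_ereal_gt' h34).
move=> Hn.
near=> r.
have r0 : (0 < r)%R by near: r; exact: nbhs_right_gt.
split => //.
have : (3 / 4)%R%:E < leb (A `&` ball a r) * (leb (ball a r))^-1 by near: r; exact: Hn.
rewrite lebesgue_measure_ball ?ltW//.
have mAb : measurable (A `&` ball a r) by apply: measurableI => //; exact: measurable_ball.
have : leb (A `&` ball a r) <= (r *+ 2)%:E.
  rewrite -(lebesgue_measure_ball a (ltW r0)).
  by apply: le_measure; [rewrite inE | rewrite inE; exact: measurable_ball | exact: subIsetr].
have : 0 <= leb (A `&` ball a r) by exact: measure_ge0.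
case: (leb (A `&` ball a r)) => // l l0 _.
have r2 : (0 < r *+ 2)%R by rewrite mulrn_wgt0.
rewrite inver gt_eqF// -EFinM !lte_fin => h.
by move: h; rewrite ltr_pdivlMr.
Unshelve. all: by end_near.
Qed.
End density.

Section meet.
Context {R : realType}.
Local Notation leb := (@lebesgue_measure R).
Local Open Scope ereal_scope.

Lemma rat_shift_meet (A B : set R) : measurable A -> measurable B ->
  0 < leb A -> 0 < leb B -> exists q : rat, exists x, A x /\ B (x - ratr q)%R.
Proof.
move=> mA mB A0 B0.
have [a Ha] := density_point A mA A0.
have [b Hb] := density_point B mB B0.
have [r [[r0 Ar] [_ Br]]] := filter_ex (filterI Ha Hb).
have [q hq] : exists q : rat, ratr q \in `](a - b - r / 4)%R, (a - b + r / 4)%R[.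
  by apply: rat_in_itvoo; lra.
exists q; apply: contrapT => H.
set c : R := ratr q.
move: hq; rewrite in_itv/= => /andP[hq1 hq2].
have mball x s : measurable (ball x s : set R) by exact: measurable_ball.
set S1 := A `&` ball a r.
set S2 := (fun x : R => (x + - c)%R) @^-1` (B `&` ball b r).
have mS1 : measurable S1 by apply: measurableI.
have mBb : measurable (B `&` ball b r) by apply: measurableI.
have mS2 : measurable S2.
  rewrite /S2 -[X in measurable X]setTI; apply: (measurable_shift (- c)) => //.
have eS2 : leb S2 = leb (B `&` ball b r) by exact: (leb_shift (- c) _ mBb).
have dS : S1 `&` S2 = set0.
  apply/seteqP; split => // x [[Ax _] [Bx _]]; apply: H; exists x; split => //.
have sub : S1 `|` S2 `<=` ball a (r + r / 4)%R.
  move=> x; rewrite /S1 /S2 !ball_itv/= !in_itv/=.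
  case=> [[_ /andP[h1 h2]]|[_ /andP[h1 h2]]]; apply/andP; split; lra.
have hU : leb (S1 `|` S2) = leb S1 + leb S2 by exact: measureU.
have : leb (S1 `|` S2) <= leb (ball a (r + r / 4)%R).
  by apply: le_measure => //; rewrite inE; [exact: measurableU|exact: mball].
rewrite hU eS2 lebesgue_measure_ball; last lra.
move=> hle.
have := lteD Ar Br.
move=> /lt_le_trans /(_ hle).
rewrite -EFinD lte_fin !mulr2n; lra.
Qed.
End meet.

Section construction.
Context {R : realType}.
Variables (f g : R -> R).
Hypotheses (mf : measurable_fun [set: R] f) (mg : measurable_fun [set: R] g).
Hypotheses (f0 : forall x, 0 <= f x) (g0 : forall x, 0 <= g x).

Definition qn (n : nat) : rat := odflt 0 (unpickle n).
Definition sh (n : nat) : R := ratr (qn n).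

Lemma sh_pickle (q : rat) : sh (pickle q) = ratr q.
Proof. by rewrite /sh /qn pickleK. Qed.

Fixpoint FG (n : nat) : (R -> R) * (R -> R) :=
  if n is m.+1 then
    let p := FG m in
    ((fun x => p.1 x - Num.min (p.1 x) (p.2 (x - sh m))),
     (fun y => p.2 y - Num.min (p.1 (y + sh m)) (p.2 (y + sh m - sh m))))
  else (f, g).

Definition F n := (FG n).1.
Definition G n := (FG n).2.
Definition h n x := Num.min (F n x) (G n (x - sh n)).

Lemma FS n x : F n.+1 x = F n x - h n x. Proof. by []. Qed.
Lemma GS n y : G n.+1 y = G n y - h n (y + sh n). Proof. by []. Qed.

Lemma FG_ge0 n : (forall x, 0 <= F n x) /\ (forall y, 0 <= G n y).
Proof.
elim: n => [|n [IF IG]]; first by split.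
split => [x|y]; first by rewrite FS /h subr_ge0 ge_min lexx.
by rewrite GS /h addrK subr_ge0 ge_min lexx orbT.
Qed.

Lemma F_ge0 n x : 0 <= F n x. Proof. exact: (FG_ge0 n).1. Qed.
Lemma G_ge0 n y : 0 <= G n y. Proof. exact: (FG_ge0 n).2. Qed.
Lemma h_ge0 n x : 0 <= h n x.
Proof. by rewrite /h le_min F_ge0 G_ge0. Qed.

Lemma FG_zero n x : F n.+1 x = 0 \/ G n.+1 (x - sh n) = 0.
Proof.
rewrite FS GS subrK /h.
have [le|lt] := leP (F n x) (G n (x - sh n)).
  by left; rewrite subrr.
by right; rewrite subrr.
Qed.

Lemma F_sum n x : f x = F n x + \sum_(0 <= k < n) h k x.
Proof.
elim: n => [|n IH]; first by rewrite big_geq// addr0.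
by rewrite big_nat_recr//= FS IH; ring.
Qed.

Lemma G_sum n y : g y = G n y + \sum_(0 <= k < n) h k (y + sh k).
Proof.
elim: n => [|n IH]; first by rewrite big_geq// addr0.
by rewrite big_nat_recr//= GS IH; ring.
Qed.

Lemma FG_measurable n : measurable_fun [set: R] (F n) /\ measurable_fun [set: R] (G n).
Proof.
elim: n => [|n [mF mG]]; first by split.
have mFs : measurable_fun [set: R] (fun x => F n (x + sh n)).
  by apply: (measurableT_comp mF); exact: measurable_shift.
have mGs : measurable_fun [set: R] (fun x => G n (x - sh n)).
  by apply: (measurableT_comp mG); exact: measurable_shift.
have mGss : measurable_fun [set: R] (fun x => G n (x + sh n - sh n)).
  by under eq_fun do rewrite addrK.
split.
  apply: measurable_funB => //; exact: measurable_minr.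
apply: measurable_funB => //; exact: measurable_minr.
Qed.

Lemma h_measurable n : measurable_fun [set: R] (h n).
Proof.
have [mF mG] := FG_measurable n.
apply: measurable_minr => //.
by apply: (measurableT_comp mG); exact: measurable_shift.
Qed.

Lemma hs_measurable n : measurable_fun [set: R] (fun y => h n (y + sh n)).
Proof. by apply: (measurableT_comp (h_measurable n)); exact: measurable_shift. Qed.

End construction.


Lemma mfunRT {R : realType} (phi : R -> \bar R) :
  measurable_fun [set: R] phi -> measurable_fun [set: measurableTypeR R] phi.
Proof. move=> H. exact H. Qed.
Lemma mfunTR {R : realType} (phi : R -> \bar R) :
  measurable_fun [set: measurableTypeR R] phi -> measurable_fun [set: R] phi.
Proof. move=> H. exact H. Qed.
Lemma msetRT {R : realType} (A : set R) :
  measurable A -> measurable (A : set (measurableTypeR R)).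
Proof. move=> H. exact H. Qed.
Lemma msetTR {R : realType} (A : set (measurableTypeR R)) :
  measurable A -> measurable (A : set R).
Proof. move=> H. exact H. Qed.

Lemma pos_measure {R : realType} (phi : R -> R) :
  measurable_fun [set: R] phi -> (forall x, 0 <= phi x) ->
  (0 < \int[@lebesgue_measure R]_x (phi x)%:E)%E ->
  (0 < @lebesgue_measure R [set x | (0 < phi x)%R])%E.
Proof.
move=> mphi phi0 ipos.
set A := [set x | 0 < phi x].
have mA : measurable A.
  have -> : A = phi @^-1` `]0, +oo[%classic.
    by apply/seteqP; split => x /=; rewrite in_itv/= andbT.
  by rewrite -[X in measurable X]setTI; apply: mphi => //; exact: measurable_itv.
rewrite lt0e measure_ge0 andbT; apply/negP => /eqP A0.
move: ipos.
have -> : (\int[@lebesgue_measure R]_x (phi x)%:E = \int[@lebesgue_measure R]_(x in A) (phi x)%:E)%E.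
  rewrite [RHS]integral_mkcond; apply: eq_integral => x _.
  rewrite patchE; case: ifPn => // /negP xA.
  have : ~ (0 < phi x) by move=> h; apply: xA; rewrite inE.
  by move/negP; rewrite -leNgt => h; congr EFin; apply/eqP; rewrite eq_le h phi0.
rewrite null_set_integral// ?ltxx//.
by apply/measurable_EFinP; exact: measurable_funTS.
Qed.

Section residual.
Context {R : realType}.
Local Notation leb := (@lebesgue_measure R).
Variables (f g : R -> R).
Hypotheses (mf : measurable_fun [set: R] f) (mg : measurable_fun [set: R] g).
Hypotheses (f0 : forall x, 0 <= f x) (g0 : forall x, 0 <= g x).

Local Notation h := (h f g).
Local Notation F := (F f g).
Local Notation G := (G f g).

Definition HH x : \bar R := (\sum_(k <oo) (h k x)%:E)%E.
Definition KK y : \bar R := (\sum_(k <oo) (h k (y + sh k))%:E)%E.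

Lemma HH_ge0 x : (0 <= HH x)%E.
Proof. by apply: nneseries_ge0 => n _ _; rewrite lee_fin h_ge0. Qed.
Lemma KK_ge0 x : (0 <= KK x)%E.
Proof. by apply: nneseries_ge0 => n _ _; rewrite lee_fin h_ge0. Qed.

Lemma HH_measurable : measurable_fun [set: R] HH.
Proof.
rewrite /HH.
have := @ge0_emeasurable_sum _ _ _ [set: R] (fun k x => (h k x)%:E) xpredT.
apply => //.
  by move=> k x _ _; rewrite lee_fin h_ge0.
by move=> k _; apply/measurable_EFinP; exact: h_measurable.
Qed.

Lemma KK_measurable : measurable_fun [set: R] KK.
Proof.
rewrite /KK.
have := @ge0_emeasurable_sum _ _ _ [set: R] (fun k x => (h k (x + sh k))%:E) xpredT.
apply => //.
  by move=> k x _ _; rewrite lee_fin h_ge0.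
by move=> k _; apply/measurable_EFinP; exact: hs_measurable.
Qed.

Lemma HH_partial n x : (\sum_(0 <= k < n) (h k x)%:E)%E = (f x - F n x)%:E.
Proof. by rewrite sumEFin; congr EFin; rewrite (F_sum f g n x); ring. Qed.

Lemma KK_partial n y : (\sum_(0 <= k < n) (h k (y + sh k))%:E)%E = (g y - G n y)%:E.
Proof. by rewrite sumEFin; congr EFin; rewrite (G_sum f g n y); ring. Qed.

Lemma HH_le x : (HH x <= (f x)%:E)%E.
Proof.
apply: lime_le; first by apply: is_cvg_nneseries => n _ _; rewrite lee_fin h_ge0.
apply: nearW => n; rewrite HH_partial lee_fin.
by rewrite lerBlDr lerDl F_ge0.
Qed.

Lemma KK_le y : (KK y <= (g y)%:E)%E.
Proof.
apply: lime_le; first by apply: is_cvg_nneseries => n _ _; rewrite lee_fin h_ge0.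
apply: nearW => n; rewrite KK_partial lee_fin.
by rewrite lerBlDr lerDl G_ge0.
Qed.

Lemma HH_fin x : HH x = (fine (HH x))%:E.
Proof.
rewrite fineK// ge0_fin_numE ?HH_ge0//.
exact: (le_lt_trans (HH_le x) (ltry _)).
Qed.

Lemma KK_fin y : KK y = (fine (KK y))%:E.
Proof.
rewrite fineK// ge0_fin_numE ?KK_ge0//.
exact: (le_lt_trans (KK_le y) (ltry _)).
Qed.

Definition Fr x := f x - fine (HH x).
Definition Gr y := g y - fine (KK y).

Lemma Fr_le n x : Fr x <= F n x.
Proof.
have := @nneseries_lim_ge R (fun k => (h k x)%:E) xpredT 0 n
  (fun k _ _ => h_ge0 f g f0 g0 k x : (0 <= (h k x)%:E)%E).
rewrite -/(HH x) HH_partial HH_fin lee_fin /Fr => H.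
lra.
Qed.

Lemma Gr_le n y : Gr y <= G n y.
Proof.
have := @nneseries_lim_ge R (fun k => (h k (y + sh k))%:E) xpredT 0 n
  (fun k _ _ => h_ge0 f g f0 g0 k _ : (0 <= (h k (y + sh k))%:E)%E).
rewrite -/(KK y) KK_partial KK_fin lee_fin /Gr => H.
lra.
Qed.

Lemma Fr_ge0 x : 0 <= Fr x.
Proof.
have := HH_le x; rewrite HH_fin lee_fin /Fr => H; lra.
Qed.

Lemma Gr_ge0 y : 0 <= Gr y.
Proof.
have := KK_le y; rewrite KK_fin lee_fin /Gr => H; lra.
Qed.

Lemma Fr_measurable : measurable_fun [set: R] Fr.
Proof.
apply: measurable_funB => //; apply: measurableT_comp; last exact: HH_measurable.
exact: fine_measurable.
Qed.

Lemma Gr_measurable : measurable_fun [set: R] Gr.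
Proof.
apply: measurable_funB => //; apply: measurableT_comp; last exact: KK_measurable.
exact: fine_measurable.
Qed.

Local Open Scope ereal_scope.

Lemma int_HH (A : set R) : measurable A ->
  \int[leb]_(x in A) HH x = \sum_(k <oo) \int[leb]_(x in A) (h k x)%:E.
Proof.
move=> mA; rewrite /HH integral_nneseries//.
  by move=> n; apply/measurable_EFinP; apply: measurable_funTS; exact: h_measurable.
by move=> n x _; rewrite lee_fin h_ge0.
Qed.

Lemma int_KK (A : set R) : measurable A ->
  \int[leb]_(x in A) KK x = \sum_(k <oo) \int[leb]_(x in A) (h k (x + sh k))%:E.
Proof.
move=> mA; rewrite /KK integral_nneseries//.
  by move=> n; apply/measurable_EFinP; apply: measurable_funTS; exact: hs_measurable.
by move=> n x _; rewrite lee_fin h_ge0.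
Qed.

Lemma int_HH_KK : \int[leb]_x HH x = \int[leb]_x KK x.
Proof.
rewrite int_HH// int_KK//; apply: eq_eseriesr => k _.
rewrite (integral_shift (sh k) (fun x => (h k x)%:E))//.
  by apply/measurable_EFinP; exact: h_measurable.
by move=> x; rewrite lee_fin h_ge0.
Qed.

Lemma decomp_f (A : set R) : measurable A ->
  \int[leb]_(x in A) (f x)%:E = \int[leb]_(x in A) (Fr x)%:E + \int[leb]_(x in A) HH x.
Proof.
move=> mA; rewrite -ge0_integralD//.
- by apply: eq_integral => x _; rewrite HH_fin -EFinD /Fr subrK.
- by move=> x _; rewrite lee_fin Fr_ge0.
- by apply/measurable_EFinP; apply: measurable_funTS; exact: Fr_measurable.
- by move=> x _; exact: HH_ge0.
- by apply: measurable_funTS; exact: HH_measurable.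
Qed.

Lemma decomp_g (A : set R) : measurable A ->
  \int[leb]_(x in A) (g x)%:E = \int[leb]_(x in A) (Gr x)%:E + \int[leb]_(x in A) KK x.
Proof.
move=> mA; rewrite -ge0_integralD//.
- by apply: eq_integral => x _; rewrite KK_fin -EFinD /Gr subrK.
- by move=> x _; rewrite lee_fin Gr_ge0.
- by apply/measurable_EFinP; apply: measurable_funTS; exact: Gr_measurable.
- by move=> x _; exact: KK_ge0.
- by apply: measurable_funTS; exact: KK_measurable.
Qed.

Hypothesis intf : \int[leb]_x (f x)%:E = 1.
Hypothesis intg : \int[leb]_x (g x)%:E = 1.

Lemma int_Fr_Gr : \int[leb]_x (Fr x)%:E = \int[leb]_x (Gr x)%:E.
Proof.
have e1 : 1 = \int[leb]_x (Fr x)%:E + \int[leb]_x KK x.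
  by rewrite -intf -int_HH_KK; apply: decomp_f.
have e2 : 1 = \int[leb]_x (Gr x)%:E + \int[leb]_x KK x.
  by rewrite -intg; apply: decomp_g.
have Ifin : \int[leb]_x KK x \is a fin_num.
  rewrite ge0_fin_numE; last by apply: integral_ge0 => x _; exact: KK_ge0.
  apply: (@le_lt_trans _ _ (\int[leb]_x (g x)%:E)); last by rewrite intg ltry.
  apply: ge0_le_integral => //.
  - by move=> x _; exact: KK_ge0.
  - by apply: mfunRT; exact: KK_measurable.
  - by apply: mfunRT; exact/measurable_EFinP.
  - by move=> x _; exact: KK_le.
by rewrite -[LHS](addeK _ Ifin) -e1 -[RHS](addeK _ Ifin) -e2.
Qed.

Lemma int_Fr0 : \int[leb]_x (Fr x)%:E = 0.
Proof.
apply/eqP; rewrite eq_le integral_ge0 ?andbT; last by move=> x _; rewrite lee_fin Fr_ge0.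
rewrite leNgt; apply/negP => pos.
have pos' : 0 < \int[leb]_x (Gr x)%:E by rewrite -int_Fr_Gr.
have A0 := pos_measure _ Fr_measurable Fr_ge0 pos.
have B0 := pos_measure _ Gr_measurable Gr_ge0 pos'.
have mlt (phi : R -> R) : measurable_fun [set: R] phi -> measurable [set x | (0 < phi x)%R].
  move=> mphi.
  have -> : [set x | (0 < phi x)%R] = phi @^-1` `]0%R, +oo[%classic.
    by apply/seteqP; split => x /=; rewrite in_itv/= andbT.
  by rewrite -[X in measurable X]setTI; apply: mphi => //; exact: measurable_itv.
have [q [x [/= Ax Bx]]] := rat_shift_meet _ _ (mlt _ Fr_measurable) (mlt _ Gr_measurable) A0 B0.
have h1 := Fr_le (pickle q).+1 x.
have h2 := Gr_le (pickle q).+1 (x - ratr q)%R.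
have := FG_zero f g (pickle q) x; rewrite sh_pickle.
move=> [e|e]; rewrite e in h1 h2; clear -Ax Bx h1 h2; simpl in *; lra.
Qed.

Lemma int_Gr0 : \int[leb]_x (Gr x)%:E = 0.
Proof. by rewrite -int_Fr_Gr int_Fr0. Qed.

Lemma HH_int (A : set R) : measurable A ->
  \int[leb]_(x in A) HH x = \int[leb]_(x in A) (f x)%:E.
Proof.
move=> mA; rewrite decomp_f//.
suff -> : \int[leb]_(x in A) (Fr x)%:E = 0 by rewrite add0e.
apply/eqP; rewrite eq_le integral_ge0 ?andbT; last by move=> x _; rewrite lee_fin Fr_ge0.
rewrite -int_Fr0; apply: ge0_subset_integral => //.
- by apply/measurable_EFinP; exact: Fr_measurable.
- by move=> x _; rewrite lee_fin Fr_ge0.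
Qed.

Lemma KK_int (A : set R) : measurable A ->
  \int[leb]_(x in A) KK x = \int[leb]_(x in A) (g x)%:E.
Proof.
move=> mA; rewrite decomp_g//.
suff -> : \int[leb]_(x in A) (Gr x)%:E = 0 by rewrite add0e.
apply/eqP; rewrite eq_le integral_ge0 ?andbT; last by move=> x _; rewrite lee_fin Gr_ge0.
rewrite -int_Gr0; apply: ge0_subset_integral => //.
- by apply/measurable_EFinP; exact: Gr_measurable.
- by move=> x _; rewrite lee_fin Gr_ge0.
Qed.

End residual.


Lemma integral_shift_set {R : realType} (c : R) (psi : R -> R) (A : set R) :
  measurable A -> measurable_fun [set: R] psi -> (forall x, 0 <= psi x) ->
  (\int[@lebesgue_measure R]_(x in [set x | A (x - c)%R]) (psi x)%:E =
   \int[@lebesgue_measure R]_(y in A) (psi (y + c)%R)%:E)%E.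
Proof.
move=> mA mpsi psi0.
have mS : measurable [set x | A (x - c)].
  rewrite -[X in measurable X]setTI; apply: (measurable_shift (- c)) => //.
rewrite integral_mkcond [RHS]integral_mkcond.
rewrite -(integral_shift c).
- apply: eq_integral => y _; rewrite !patchE /=.
  by congr (if _ then _ else _); apply/idP/idP; rewrite !inE/= addrK.
- apply: mfunTR; apply/(measurable_restrictT _ (msetRT _ mS)); apply/measurable_EFinP.
  exact: measurable_funTS.
- move=> x; rewrite patchE; case: ifP => _ //; by rewrite lee_fin.
Qed.

Section coupling.
Context {R : realType}.
Local Notation leb := (@lebesgue_measure R).
Local Notation T := (measurableTypeR R).
Variables (f g : R -> R).
Hypotheses (mf : measurable_fun [set: R] f) (mg : measurable_fun [set: R] g).
Hypotheses (f0 : forall x, 0 <= f x) (g0 : forall x, 0 <= g x).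
Local Notation h := (h f g).
Local Open Scope ereal_scope.

Definition dens k (A : set T) : \bar R := \int[leb]_(x in A) (h k x)%:E.

Let dens0 k : dens k set0 = 0.
Proof. by rewrite /dens integral_set0. Qed.

Let dens_ge0 k A : 0 <= dens k A.
Proof. by apply: integral_ge0 => x _; rewrite lee_fin h_ge0. Qed.

Let dens_sigma k : semi_sigma_additive (dens k).
Proof.
apply: semi_sigma_additive_nng_induced.
  by apply: mfunRT; apply/measurable_EFinP; exact: h_measurable.
by move=> x; rewrite lee_fin h_ge0.
Qed.

HB.instance Definition _ k := isMeasure.Build _ _ _ (dens k) (dens0 k) (dens_ge0 k) (dens_sigma k).

Definition phi k (x : T) : T * T := (x, (x - sh k)%R).

Lemma mphi k : measurable_fun [set: T] (phi k).
Proof.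
apply: measurable_fun_pair; first exact: measurable_id.
have := measurable_shift (- sh k : R); move=> H; exact H.
Qed.

Definition pk k (A : set (T * T)) : \bar R := dens k (phi k @^-1` A).

Let pk0 k : pk k set0 = 0.
Proof. by rewrite /pk preimage_set0 dens0. Qed.

Let pk_ge0 k A : 0 <= pk k A.
Proof. exact: dens_ge0. Qed.

Let pk_sigma k : semi_sigma_additive (pk k).
Proof.
have := @measure_semi_sigma_additive _ _ _ (pushforward (dens k) (phi k)).
apply; exact: mphi.
Qed.

HB.instance Definition _ k := isMeasure.Build _ _ _ (pk k) (pk0 k) (pk_ge0 k) (pk_sigma k).

Definition PP := mseries (fun k => (pk k : measure _ _)) 0.

Lemma PPE (E : set (T * T)) : PP E = \sum_(k <oo) dens k (phi k @^-1` E).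
Proof. by []. Qed.

Lemma PP_fst (A : set T) : measurable A ->
  \int[leb]_x (f x)%:E = 1 -> \int[leb]_x (g x)%:E = 1 ->
  PP (fst @^-1` A) = \int[leb]_(x in A) (f x)%:E.
Proof.
move=> mA intf intg.
rewrite PPE -(HH_int f g mf mg f0 g0 intf intg _ (msetTR _ mA)) int_HH//.

Qed.

Lemma PP_snd (A : set T) : measurable A ->
  \int[leb]_x (f x)%:E = 1 -> \int[leb]_x (g x)%:E = 1 ->
  PP (snd @^-1` A) = \int[leb]_(x in A) (g x)%:E.
Proof.
move=> mA intf intg.
rewrite PPE -(KK_int f g mf mg f0 g0 intf intg _ (msetTR _ mA)) int_KK//.
apply: eq_eseriesr => k _.
rewrite /dens.
have -> : phi k @^-1` (snd @^-1` A) = [set x | A (x - sh k)%R] by [].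
apply: integral_shift_set => //.
  exact: h_measurable.
exact: h_ge0.
Qed.

Lemma PP_setT : \int[leb]_x (f x)%:E = 1 -> \int[leb]_x (g x)%:E = 1 ->
  PP setT = 1.
Proof.
move=> intf intg.
by rewrite -(preimage_setT fst) PP_fst.
Qed.

Lemma PP_null : exists N, [/\ measurable N, PP N = 0 &
  ~` [set w : T * T | exists q : rat, (w.1 - w.2)%R = ratr q] `<=` N].
Proof.
set D := fun w : T * T => (w.1 - w.2)%R : R.
have mD : measurable_fun [set: T * T] D.
  apply: measurable_funB.
    by have := @measurable_fst _ _ T T; move=> H; exact H.
  by have := @measurable_snd _ _ T T; move=> H; exact H.
exists (~` \bigcup_k (D @^-1` [set sh k])); split.
- apply: measurableC; apply: bigcupT_measurable => k.
  by rewrite -[X in measurable X]setTI; apply: mD => //; exact: measurable_set1.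
- rewrite PPE; apply: eseries0 => k _ _.
  have -> : phi k @^-1` (~` \bigcup_k0 (D @^-1` [set sh k0])) = set0.
    apply/seteqP; split => // x /= H; apply: H; exists k => //=.
    by rewrite /D /= opprB addrC subrK.
  by rewrite dens0.
- move=> w /= Hw [k _ /= Hk]; apply: Hw; exists (qn k).
  by rewrite /D in Hk; rewrite Hk.
Qed.

End coupling.


Lemma mnormalize1E d (T : measurableType d) (R : realType)
  (m : {measure set T -> \bar R}) (P : probability T R) (U : set T) :
  m setT = 1%E -> mnormalize m P U = m U.
Proof.
move=> m1; rewrite /mnormalize m1 onee_eq0/=.
by rewrite invr1 mule1.
Qed.

Lemma density_of {R : realType} (mu : probability (measurableTypeR R) R) :
  mu `<< (@lebesgue_measure R) ->
  exists f : R -> R, [/\ measurable_fun [set: R] f, (forall x, 0 <= f x),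
    (forall A : set (measurableTypeR R), measurable A ->
       mu A = (\int[@lebesgue_measure R]_(x in A) (f x)%:E)%E) &
    (\int[@lebesgue_measure R]_x (f x)%:E = 1)%E].
Proof.
move=> hmu.
pose F := Radon_Nikodym_SigmaFinite.f mu (@lebesgue_measure R).
have FE x : F x = (fine (F x))%:E.
  by rewrite fineK//; exact: Radon_Nikodym_SigmaFinite.f_fin_num.
have muE (A : set (measurableTypeR R)) : measurable A ->
    mu A = (\int[@lebesgue_measure R]_(x in A) (fine (F x))%:E)%E.
  move=> mA; rewrite (Radon_Nikodym_SigmaFinite.f_integral hmu)//.
  by apply: eq_integral => x _; rewrite -FE.
exists (fun x => fine (F x)); split.
- have mF : measurable_fun [set: measurableTypeR R] F.
    exact: measurable_int (Radon_Nikodym_SigmaFinite.f_integrable hmu).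
  have : measurable_fun [set: measurableTypeR R] (fine \o F).
    by apply: measurableT_comp => //; exact: fine_measurable.
  move=> H; exact H.
- by move=> x; apply: fine_ge0; exact: Radon_Nikodym_SigmaFinite.f_ge0.
- exact: muE.
- by rewrite -muE// probability_setT.
Qed.

Theorem corollary8p6 (R : realType)
    (mu nu : probability (measurableTypeR R) R)
    (hmu : mu `<< (@lebesgue_measure R))
    (hnu : nu `<< (@lebesgue_measure R)) :
  exists (d : measure_display) (Omega : measurableType d)
         (P : probability Omega R) (X Y : {RV P >-> measurableTypeR R}),
    (forall A : set (measurableTypeR R), measurable A ->
       distribution P X A = mu A) /\
    (forall A : set (measurableTypeR R), measurable A ->
       distribution P Y A = nu A) /\
    {ae P, forall w, exists q : rat, X w - Y w = ratr q}.
Proof.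
have [f [mf f0 muE intf]] := density_of mu hmu.
have [g [mg g0 nuE intg]] := density_of nu hnu.
pose T := measurableTypeR R.
pose m := PP f g mf mg f0 g0.
have m1 : m setT = 1%E by exact: PP_setT.
pose P : probability (T * T)%type R := mnormalize m point.
have PE U : P U = m U by exact: mnormalize1E.
pose X : {mfun (T * T)%type >-> T} := HB.pack (@fst T T) (isMeasurableFun.Build _ _ _ _ (@fst T T) measurable_fst).
pose Y : {mfun (T * T)%type >-> T} := HB.pack (@snd T T) (isMeasurableFun.Build _ _ _ _ (@snd T T) measurable_snd).
exists _, (T * T)%type, P, X, Y; split; [|split].
- move=> A mA; rewrite /distribution /pushforward PE.
  transitivity (PP f g mf mg f0 g0 (fst @^-1` A)); first by [].
  by rewrite (PP_fst _ _ _ _ _ _ _ mA intf intg) muE.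
- move=> A mA; rewrite /distribution /pushforward PE.
  transitivity (PP f g mf mg f0 g0 (snd @^-1` A)); first by [].
  by rewrite (PP_snd _ _ _ _ _ _ _ mA intf intg) nuE.
- have [N [mN N0 sub]] := PP_null f g mf mg f0 g0.
  exists N; split => //; first by rewrite PE.
Qed.
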